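(* Let $0\le m\le n\le l$ with $n\ge1$, and let $([m],v,e),([n],w,f)$ be graphs with attributes in $\mathcal X,\mathcal Y$. Extend $([n],w,f)$ to $([l],w,f)$ by $w_i=x'_*$, $f_{ii}=y_0$ for $n+1\le i\le l$ and $f_{ii'}=y'_*$ whenever $\max\{i,i'\}\ge n+1$, $i\ne i'$. Then, computing GOSPA1 in the extended spaces $\mathcal X\cup\{x_*,x'_*\}$, $\mathcal Y\cup\{y_*,y'_*\}$ with the same $p$, $C_1$ and $C_{\mathcal Y}$, $$d_{\mathbb G,R_1}(([m],v,e),([n],w,f))\le d_{\mathbb G,R_1}(([m],v,e),([l],w,f)).$$
   Context: $(\mathcal X,d_{\mathcal X})$, $(\mathcal Y,d_{\mathcal Y})$ are pseudometric spaces with $\mathrm{diam}(\mathcal X)\le C_{\mathcal X}$, $\mathrm{diam}(\mathcal Y)\le C_{\mathcal Y}$, $y_0\in\mathcal Y$ a distinguished ''no edge'' element, $p\ge1$, $C_1^p\ge C_{\mathcal X}^p+\frac12C_{\mathcal Y}^p$. New points $x_*,x'_*$ are adjoined to $\mathcal X$ with $d_{\mathcal X}(x_*,x)^p=d_{\mathcal X}(x'_*,x)^p=d_{\mathcal X}(x_*,x'_* )^p=C_1^p-\frac12C_{\mathcal Y}^p$ for all $x\in\mathcal X$ (symmetric, zero self-distances), and $y_*,y'_*$ to $\mathcal Y$ with $d_{\mathcal Y}(y_*,y)=d_{\mathcal Y}(y'_*,y)=d_{\mathcal Y}(y_*,y'_* )=C_{\mathcal Y}$ for $y\in\mathcal Y$.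 A graph $([n],v,e)$ has vertex map $v$ into the (extended) vertex space and symmetric edge map $e$ into the (extended) edge space with $e_{ii}=y_0$; $S_n$ is the set of permutations of $[n]=\{1,\dots,n\}$. GOSPA1 distance (order $p$, penalty $C_1$): for graphs with $n\ge\max\{m,1\}$, with $0/0:=0$, $$d_{\mathbb G,R_1}(([m],v,e),([n],w,f))=n^{-1/p}\min_{\pi\in S_n}\Big[(n-m)C_1^p+\sum_{i\in[m]}d_{\mathcal X}(v_i,w_{\pi(i)})^p+\frac{1}{2(n-1)}\sum_{i\in[m]}\Big(\sum_{i'\in[m]}d_{\mathcal Y}(e_{ii'},f_{\pi(i)\pi(i')})^p+(n-m)C_{\mathcal Y}^p\Big)\Big]^{1/p}.$$ *)

(* Defs.v *)
From HB Require Import structures.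
From mathcomp Require Import all_boot all_order all_algebra.
From mathcomp Require Import fingroup perm.
From mathcomp Require Import all_classical all_reals exp.
Set Implicit Arguments. Unset Strict Implicit. Unset Printing Implicit Defensive.
Import Order.TTheory GRing.Theory Num.Theory.
Local Open Scope ring_scope.

Section Gospa.
Variable R : realType.

Definition pseudometric (T : Type) (d : T -> T -> R) :=
  [/\ forall x, d x x = 0, forall x y, 0 <= d x y, forall x y, d x y = d y x
    & forall x y z, d x z <= d x y + d y z].

Definition diam_le (T : Type) (d : T -> T -> R) (C : R) := forall x y, d x y <= C.

Definition is_graph (V E : Type) (y0 : E) (m : nat) (v : 'I_m -> V)
  (e : 'I_m -> 'I_m -> E) := (forall i j, e i j = e j i) /\ (forall i, e i i = y0).

Definition gospa_cost (V E : Type) (dV : V -> V -> R) (dE : E -> E -> R)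
  (p C1 CY : R) (m n : nat) (hmn : (m <= n)%N)
  (v : 'I_m -> V) (e : 'I_m -> 'I_m -> E) (w : 'I_n -> V) (f : 'I_n -> 'I_n -> E)
  (pi : {perm 'I_n}) : R :=
  (n - m)%:R * C1 `^ p
  + \sum_(i < m) dV (v i) (w (pi (widen_ord hmn i))) `^ p
  + (2 * (n.-1)%:R)^-1 *
    \sum_(i < m) (\sum_(i' < m)
        dE (e i i') (f (pi (widen_ord hmn i)) (pi (widen_ord hmn i'))) `^ p
      + (n - m)%:R * CY `^ p).
(* note: x / 0 = 0 in MathComp, matching the convention 0/0 := 0 *)

Definition gospa1 (V E : Type) (dV : V -> V -> R) (dE : E -> E -> R)
  (p C1 CY : R) (m n : nat) (hmn : (m <= n)%N)
  (v : 'I_m -> V) (e : 'I_m -> 'I_m -> E) (w : 'I_n -> V) (f : 'I_n -> 'I_n -> E) : R :=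
  (n%:R) `^ (- p^-1) *
  (\big[Order.min/gospa_cost dV dE p C1 CY hmn v e w f (1%g : {perm 'I_n})]_(pi : {perm 'I_n})
      gospa_cost dV dE p C1 CY hmn v e w f pi) `^ (p^-1).

End Gospa.

Inductive ext (T : Type) := Orig of T | Star | Star'.
Arguments Star {T}. Arguments Star' {T}.

Section Ext.
Variable R : realType.

Definition dX_ext (X : Type) (dX : X -> X -> R) (p C1 CY : R) (a b : ext X) : R :=
  match a, b with
  | Orig x, Orig y => dX x y
  | Star, Star => 0
  | Star', Star' => 0
  | _, _ => (C1 `^ p - CY `^ p / 2) `^ (p^-1)
  end.

Definition dY_ext (Y : Type) (dY : Y -> Y -> R) (CY : R) (a b : ext Y) : R :=
  match a, b with
  | Orig x, Orig y => dY x y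
  | Star, Star => 0
  | Star', Star' => 0
  | _, _ => CY
  end.

Definition ext_w (X : Type) (n l : nat) (w : 'I_n -> X) (i : 'I_l) : ext X :=
  match insub (nat_of_ord i) with
  | Some j => Orig (w j)
  | None => Star'
  end.

Definition ext_f (Y : Type) (y0 : Y) (n l : nat) (f : 'I_n -> 'I_n -> Y)
  (i j : 'I_l) : ext Y :=
  match insub (nat_of_ord i), insub (nat_of_ord j) with
  | Some i1, Some j1 => Orig (f i1 j1)
  | _, _ => if i == j then Orig y0 else Star'
  end.
End Ext.

(* Main.v *)
Require Import Defs.
From HB Require Import structures.
From mathcomp Require Import all_boot all_order all_algebra.
From mathcomp Require Import fingroup perm.
From mathcomp Require Import all_classical all_reals exp.
From mathcomp Require Import ring lra.
Import Order.TTheory GRing.Theory Num.Theory.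
Local Open Scope ring_scope.

Lemma restrict_perm (l : nat) (pi : 'S_l.+1) : exists pi1 : 'S_l,
  forall j : 'I_l, (pi (widen_ord (leqnSn l) j) < l)%N ->
    val (pi1 j) = val (pi (widen_ord (leqnSn l) j)).
Proof.
set a := (pi^-1)%g ord_max.
set pi2 := (tperm a ord_max * pi)%g.
have h2 : pi2 ord_max = ord_max by rewrite permM tpermR /a permKV.
have hne : forall j : 'I_l, pi2 (lift ord_max j) != ord_max.
  move=> j; rewrite -{2}h2 (inj_eq perm_inj) eq_sym; exact: neq_lift.
pose g (j : 'I_l) := odflt j (unlift ord_max (pi2 (lift ord_max j))).
have hg : forall j, pi2 (lift ord_max j) = lift ord_max (g j).
  move=> j; rewrite /g; case: unliftP => [k -> //|] /eqP; by rewrite (negbTE (hne j)).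
have ginj : injective g.
  move=> j1 j2 e; apply: (@lift_inj _ ord_max); apply: (@perm_inj _ pi2).
  by rewrite !hg e.
exists (perm ginj) => j hj; rewrite permE.
have : val (lift ord_max (g j)) = val (g j) by exact: lift_max.
move=> <-; rewrite -hg.
have -> : lift ord_max j = widen_ord (leqnSn l) j by apply: val_inj; exact: lift_max.
rewrite permM tpermD //.
  apply/eqP => e; move: hj; rewrite -e /a permKV /=; by rewrite ltnn.
apply/eqP => /(congr1 val) /= e; have := ltn_ord j; by rewrite -[nat_of_ord j]e ltnn.
Qed.

Lemma ext_perm (l : nat) : forall n (hnl : (n <= l)%N) (pi : 'S_l), exists s : 'S_n,
  forall j : 'I_n, (pi (widen_ord hnl j) < n)%N -> val (s j) = val (pi (widen_ord hnl j)).
Proof.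
elim: l => [|l IH] n hnl pi.
  exists 1%g => j; by move: (leq_trans (ltn_ord j) hnl); rewrite ltn0.
case hn: (n < l.+1)%N.
  have hnl' : (n <= l)%N by [].
  case: (@restrict_perm l pi) => pi1 h1.
  case: (IH n hnl' pi1) => s hs.
  exists s => j hj.
  have e : widen_ord hnl j = widen_ord (leqnSn l) (widen_ord hnl' j) by exact: val_inj.
  rewrite e in hj *.
  have h1' := h1 (widen_ord hnl' j) (leq_trans hj hnl').
  rewrite hs; first exact: h1'.
  by rewrite h1'.
have e : n = l.+1 by apply/eqP; rewrite eqn_leq hnl leqNgt hn.
subst n; exists pi => j _; congr (val (pi _)); exact: val_inj.
Qed.

Section H.
Variable R : realType.

Lemma bigmin_le (I : finType) (F : I -> R) x0 i0 :
  \big[Order.min/x0]_(i : I) F i <= F i0.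
Proof.
rewrite unlock /reducebig.
have : i0 \in index_enum I by rewrite mem_index_enum.
elim: (index_enum I) => [//|a s IH] /=.
rewrite inE => /orP [/eqP <-|/IH h]; first by rewrite ge_min lexx.
by rewrite ge_min h orbT.
Qed.

Lemma le_bigmin (I : finType) (F : I -> R) x0 y :
  y <= x0 -> (forall i, y <= F i) -> y <= \big[Order.min/x0]_(i : I) F i.
Proof.
move=> h0 h; apply: (big_ind (fun t => y <= t)) => //.
by move=> a b ha hb; rewrite le_min ha hb.
Qed.

Lemma bigmin_ge0 (I : finType) (F : I -> R) x0 :
  0 <= x0 -> (forall i, 0 <= F i) -> 0 <= \big[Order.min/x0]_(i : I) F i.
Proof. exact: le_bigmin. Qed.

Lemma final_pow (p N L Mn Ml : R) : 0 < p -> 0 < N -> 0 < L -> 0 <= Mn -> 0 <= Ml ->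
  L * Mn <= N * Ml -> N `^ (- p^-1) * Mn `^ p^-1 <= L `^ (- p^-1) * Ml `^ p^-1.
Proof.
move=> hp hN hL hMn hMl h.
have hq : 0 <= p^-1 by rewrite invr_ge0 ltW.
rewrite !powRN.
have hNq : 0 < N `^ p^-1 by apply: powR_gt0.
have hLq : 0 < L `^ p^-1 by apply: powR_gt0.
rewrite ler_pdivrMl // mulrCA ler_pdivlMl //.
have hL0 : 0 <= L by exact: ltW.
have hN0 : 0 <= N by exact: ltW.
rewrite -(powRM _ hL0 hMn) -(powRM _ hN0 hMl).
apply: (ge0_ler_powR hq); rewrite ?nnegrE ?mulr_ge0 //.
Qed.

Lemma powR_inv_pow (z p : R) : 0 <= z -> 0 < p -> (z `^ p^-1) `^ p = z.
Proof.
move=> hz hp; by rewrite -powRrM mulVf ?gt_eqF // powRr1.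
Qed.

Lemma vert (X : Type) (dX : X -> X -> R) (C1 CY p N L : R) n l
  (w : 'I_n -> X) (s : 'S_n) (j : 'I_n) (P : 'I_l) (a : X) :
  0 < p -> 0 <= N -> N <= L -> 0 <= C1 `^ p - CY `^ p / 2 ->
  (forall u v, dX u v `^ p <= C1 `^ p - CY `^ p / 2) ->
  ((P < n)%N -> val (s j) = val P) ->
  L * dX a (w (s j)) `^ p <=
  N * dX_ext dX p C1 CY (Orig a) (ext_w w P) `^ p + (L - N) * (C1 `^ p - CY `^ p / 2).
Proof.
move=> hp hN hNL hz hb hs.
have := hb a (w (s j)); set t := dX _ _ `^ p; set z := _ - _ => ht.
rewrite /ext_w; case: insubP => [k hk hv|hk] /=.
  have e : s j = k by apply: val_inj; rewrite hv; exact: hs.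
  rewrite -e -/t.
  have : (L - N) * t <= (L - N) * z by apply: ler_wpM2l; rewrite ?subr_ge0.
  nra.
rewrite powR_inv_pow // -/z.
have : L * t <= L * z by apply: ler_wpM2l => //; apply: le_trans hN hNL.
nra.
Qed.

Lemma edge_off (Y : Type) (dY : Y -> Y -> R) (CY p A B : R) (y0 : Y) n l
  (f : 'I_n -> 'I_n -> Y) (s : 'S_n) (j j' : 'I_n) (P P' : 'I_l) (ey : Y) :
  0 <= A -> B <= A -> P != P' ->
  (forall u v, dY u v `^ p <= CY `^ p) ->
  ((P < n)%N -> val (s j) = val P) -> ((P' < n)%N -> val (s j') = val P') ->
  A * dY ey (f (s j) (s j')) `^ p <=
  B * dY_ext dY CY (Orig ey) (ext_f y0 f P P') `^ p + (A - B) * CY `^ p.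
Proof.
move=> hA hBA hPP hb hs hs'.
have := hb ey (f (s j) (s j')); set t := dY _ _ `^ p; set y := CY `^ p => ht.
have hy : A * t <= A * y by apply: ler_wpM2l.
have hy2 : (A - B) * t <= (A - B) * y by apply: ler_wpM2l => //; rewrite subr_ge0.
rewrite /ext_f; case: (insubP 'I_n (val P)) => [k hk hv|hk];
  case: (insubP 'I_n (val P')) => [k' hk' hv'|hk'] /=;
  rewrite ?(negbTE hPP) /= -?/y; try nra.
have e : s j = k by apply: val_inj; rewrite hv; exact: hs.
have e' : s j' = k' by apply: val_inj; rewrite hv'; exact: hs'.
rewrite -e -e' -/t; nra.
Qed.

Lemma edge_diag (Y : Type) (dY : Y -> Y -> R) (CY : R) (y0 : Y) n l
  (f : 'I_n -> 'I_n -> Y) (P : 'I_l) :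
  dY y0 y0 = 0 -> (forall k, f k k = y0) ->
  dY_ext dY CY (Orig y0) (ext_f y0 f P P) = 0.
Proof.
move=> h0 hf; rewrite /ext_f; case: insubP => [k hk hv|hk] /=; last by rewrite eqxx.
by rewrite hf.
Qed.
End H.

Lemma keyK (R : realType) (n l : nat) : (2 <= n)%N -> (n <= l)%N ->
  (n%:R : R) * (2 * (l.-1)%:R)^-1 <= l%:R * (2 * (n.-1)%:R)^-1.
Proof.
move=> hn hl.
have hl2 : (2 <= l)%N by apply: leq_trans hl.
rewrite -!subn1 !natrB ?(leq_trans _ hn) ?(leq_trans _ hl2) //.
have hN : (2 : R) <= n%:R by rewrite (ler_nat R 2 n).
have hNL : (n%:R : R) <= l%:R by rewrite ler_nat.
have h1 : 0 < 2 * ((n%:R : R) - 1) by lra.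
have h2 : 0 < 2 * ((l%:R : R) - 1) by lra.
rewrite ler_pdivrMr // mulrAC ler_pdivlMr //.
nra.
Qed.

Lemma keyY (R : realType) (n l : nat) : (1 <= n)%N -> (n <= l)%N ->
  (l%:R : R) * (2 * (n.-1)%:R)^-1 * (n%:R - 1) - n%:R * (2 * (l.-1)%:R)^-1 * (l%:R - 1)
  <= (l%:R - n%:R) / 2.
Proof.
move=> hn hl.
have hNL : (n%:R : R) <= l%:R by rewrite ler_nat.
have hN1 : (1 : R) <= n%:R by rewrite (ler_nat R 1 n).
case: n hn hl hNL hN1 => [//|[|n]] _ hl hNL hN1.
  rewrite /= mulr0 invr0 mulr0 mul0r add0r.
  have hb : 0 <= (2 * ((l.-1)%:R : R))^-1 by rewrite invr_ge0 mulr_ge0.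
  have : 0 <= (2 * ((l.-1)%:R : R))^-1 * (l%:R - 1) by rewrite !mulr_ge0 // subr_ge0.
  rewrite mul1r; lra.
have hl2 : (2 <= l)%N by apply: leq_trans hl.
have e1 : ((n.+2).-1%:R : R) = n.+2%:R - 1 by rewrite -subn1 natrB.
have e2 : ((l.-1)%:R : R) = l%:R - 1 by rewrite -subn1 natrB // (leq_trans _ hl2).
rewrite e1 e2.
have h1 : (n.+2%:R : R) - 1 != 0 by rewrite subr_eq0 pnatr_eq1.
have h2 : (l%:R : R) - 1 != 0 by rewrite subr_eq0 pnatr_eq1; case: l hl {hNL e2 hl2} => [|[|]].
have hh : forall x D : R, D != 0 -> x / (2 * D) * D = x / 2.
  by move=> x D hD; field.
rewrite !hh //.
lra.
Qed.

Lemma cost_ge0 (R : realType) (V E : Type) (dV : V -> V -> R) (dE : E -> E -> R)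
  (p C1 CY : R) (m n : nat) (hmn : (m <= n)%N)
  (v : 'I_m -> V) (e : 'I_m -> 'I_m -> E) (w : 'I_n -> V) (f : 'I_n -> 'I_n -> E)
  (pi : {perm 'I_n}) : 0 <= gospa_cost dV dE p C1 CY hmn v e w f pi.
Proof.
rewrite /gospa_cost; apply: addr_ge0; first apply: addr_ge0.
- by rewrite mulr_ge0 // powR_ge0.
- by apply: sumr_ge0 => i _; rewrite powR_ge0.
apply: mulr_ge0; first by rewrite invr_ge0 mulr_ge0.
apply: sumr_ge0 => i _; apply: addr_ge0; last by rewrite mulr_ge0 // powR_ge0.
by apply: sumr_ge0 => j _; rewrite powR_ge0.
Qed.

Lemma final_alg (R : realType) (m n l : nat) (a b c y SXn SXl SYn SYl : R) :
  0 <= y ->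
  l%:R * SXn <= n%:R * SXl + (l%:R - n%:R) * (c - y / 2) *+ m ->
  l%:R * a * SYn <= n%:R * b * SYl + (l%:R * a - n%:R * b) * y *+ m.-1 *+ m ->
  l%:R * a * (n%:R - 1) - n%:R * b * (l%:R - 1) <= (l%:R - n%:R) / 2 ->
  l%:R * ((n%:R - m%:R) * c + SXn + a * (SYn + (n%:R - m%:R) * y *+ m)) <=
  n%:R * ((l%:R - m%:R) * c + SXl + b * (SYl + (l%:R - m%:R) * y *+ m)).
Proof.
move=> hy hV hE hK.
have hM0 : (0 : R) <= m%:R by rewrite ler0n.
have hKM : m%:R * y * (l%:R * a * (n%:R - 1) - n%:R * b * (l%:R - 1)) <=
           m%:R * y * ((l%:R - n%:R) / 2) by apply: ler_wpM2l => //; rewrite mulr_ge0.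
have e1 : forall (k : nat) (x : R), x *+ k.-1 *+ k = x * (k%:R * (k%:R - 1)).
  move=> k x; case: k => [|k]; first by rewrite !mulr0n mul0r mulr0.
  rewrite -mulrnA /= -[LHS]mulr_natr natrM -[k.+1%:R]natr1; ring.
rewrite e1 -![(_ * _) *+ m]mulr_natr in hV hE *.
set L := l%:R in hV hE hK hKM *. set N := n%:R in hV hE hK hKM *. set M := m%:R in hV hE hK hKM *.
have -> : L * ((N - M) * c + SXn + a * (SYn + (N - M) * y * M)) =
   L * SXn + L * a * SYn + (L * (N - M) * c + L * a * (N - M) * y * M) by ring.
have -> : N * ((L - M) * c + SXl + b * (SYl + (L - M) * y * M)) =
   N * SXl + N * b * SYl + (N * (L - M) * c + N * b * (L - M) * y * M) by ring.
set u := L * SXn in hV *. set u' := N * SXl in hV *.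
set t := L * a * SYn in hE *. set t' := N * b * SYl in hE *.
have : (L - N) * (c - y / 2) * M + (L * a - N * b) * y * (M * (M - 1)) + (L * (N - M) * c + L * a * (N - M) * y * M)
   <= N * (L - M) * c + N * b * (L - M) * y * M.
  rewrite -subr_ge0.
  have -> : N * (L - M) * c + N * b * (L - M) * y * M -
    ((L - N) * (c - y / 2) * M + (L * a - N * b) * y * (M * (M - 1)) + (L * (N - M) * c + L * a * (N - M) * y * M))
    = M * y * ((L - N) / 2) - M * y * (L * a * (N - 1) - N * b * (L - 1)) by ring.
  by rewrite subr_ge0.
lra.
Qed.

Arguments dY_ext : simpl never.
Arguments dX_ext : simpl never.

Theorem lemmaB (R : realType) (X Y : Type) (dX : X -> X -> R) (dY : Y -> Y -> R)
  (CX CY C1 p : R) (y0 : Y)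
  (hX : pseudometric dX) (hY : pseudometric dY)
  (hCX0 : 0 <= CX) (hCY0 : 0 <= CY) (hC10 : 0 <= C1)
  (hdX : diam_le dX CX) (hdY : diam_le dY CY)
  (hp : 1 <= p) (hC1 : CX `^ p + CY `^ p / 2 <= C1 `^ p)
  (m n l : nat) (hmn : (m <= n)%N) (hnl : (n <= l)%N) (hn : (1 <= n)%N)
  (v : 'I_m -> X) (e : 'I_m -> 'I_m -> Y) (w : 'I_n -> X) (f : 'I_n -> 'I_n -> Y)
  (hG1 : is_graph y0 v e) (hG2 : is_graph y0 w f) :
  gospa1 dX dY p C1 CY hmn v e w f <=
  gospa1 (dX_ext dX p C1 CY) (dY_ext dY CY) p C1 CY (leq_trans hmn hnl)
    (fun i => Orig (v i)) (fun i j => Orig (e i j))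
    (@ext_w X n l w) (@ext_f Y y0 n l f).
Proof.
have hp0 : 0 < p by apply: lt_le_trans hp.
have hpn0 : p != 0 by rewrite gt_eqF.
case: hX => hX0 hXge _ _; case: hY => hY0 hYge _ _.
case: hG1 => _ hed; case: hG2 => _ hfd.
have hy0 : 0 <= CY `^ p by apply: powR_ge0.
have hx0 : 0 <= CX `^ p by apply: powR_ge0.
have hz : 0 <= C1 `^ p - CY `^ p / 2 by lra.
have hbX : forall u v, dX u v `^ p <= C1 `^ p - CY `^ p / 2.
  move=> u v'; apply: (@le_trans _ _ (CX `^ p)); last lra.
  by apply: (ge0_ler_powR (ltW hp0)); rewrite ?nnegrE.
have hbY : forall u v, dY u v `^ p <= CY `^ p.
  by move=> u v'; apply: (ge0_ler_powR (ltW hp0)); rewrite ?nnegrE.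
have hNp : (0 : R) < n%:R by rewrite ltr0n.
have hNL : (n%:R : R) <= l%:R by rewrite ler_nat.
have hLp : (0 : R) < l%:R by apply: lt_le_trans hNL.
set hml := leq_trans hmn hnl.
set costn := gospa_cost dX dY p C1 CY hmn v e w f.
set costl := gospa_cost (dX_ext dX p C1 CY) (dY_ext dY CY) p C1 CY hml
    (fun i => Orig (v i)) (fun i j => Orig (e i j)) (@ext_w X n l w) (@ext_f Y y0 n l f).
have core : forall (s : 'S_n) (pi : 'S_l),
   (forall i : 'I_m, (pi (widen_ord hml i) < n)%N ->
      val (s (widen_ord hmn i)) = val (pi (widen_ord hml i))) ->
   l%:R * costn s <= n%:R * costl pi.
  move=> s pi hs.
  have hL0 : (0 : R) <= l%:R by exact: ltW.
  have hN0 : (0 : R) <= n%:R by exact: ltW.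
  set a : R := (2 * (n.-1)%:R)^-1.
  set b : R := (2 * (l.-1)%:R)^-1.
  have ha : 0 <= a by rewrite invr_ge0 mulr_ge0.
  have hb : 0 <= b by rewrite invr_ge0 mulr_ge0.
  have hV : \sum_(i < m) l%:R * dX (v i) (w (s (widen_ord hmn i))) `^ p <=
      \sum_(i < m) (n%:R * dX_ext dX p C1 CY (Orig (v i)) (ext_w w (pi (widen_ord hml i))) `^ p
        + (l%:R - n%:R) * (C1 `^ p - CY `^ p / 2)).
    apply: ler_sum => i _; apply: vert => //; exact: hs.
  rewrite big_split /= sumr_const card_ord -!mulr_sumr in hV.
  have hRow : forall i : 'I_m,
      l%:R * a * \sum_(i' < m) dY (e i i') (f (s (widen_ord hmn i)) (s (widen_ord hmn i'))) `^ p <=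
      n%:R * b * \sum_(i' < m) dY_ext dY CY (Orig (e i i'))
         (ext_f y0 f (pi (widen_ord hml i)) (pi (widen_ord hml i'))) `^ p
      + (l%:R * a - n%:R * b) * CY `^ p *+ m.-1.
    move=> i.
    rewrite [X in _ * X <= _](bigD1 i) // [X in _ <= _ * X + _](bigD1 i) //.
    rewrite hed hfd hY0 powR0 // edge_diag // powR0 // /= !add0r.
    rewrite !mulr_sumr.
    apply: le_trans (_ : _ <= \sum_(i' < m | i' != i)
        (n%:R * b * dY_ext dY CY (Orig (e i i'))
           (ext_f y0 f (pi (widen_ord hml i)) (pi (widen_ord hml i'))) `^ p
         + (l%:R * a - n%:R * b) * CY `^ p)) _; last first.
      by rewrite big_split /= sumr_const cardC1 card_ord.
    apply: ler_sum => i' hi'.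
    have hm2 : (2 <= m)%N.
      have h3 : (nat_of_ord i' != nat_of_ord i).
        by apply: contra hi' => /eqP h; apply/eqP/val_inj.
      rewrite ltnNge; apply/negP => hm.
      have a1 : nat_of_ord i = 0%N.
        by apply/eqP; rewrite -leqn0 -ltnS (leq_trans (ltn_ord i) hm).
      have a2 : nat_of_ord i' = 0%N.
        by apply/eqP; rewrite -leqn0 -ltnS (leq_trans (ltn_ord i') hm).
      by move: h3; rewrite a1 a2.
    apply: edge_off => //; try exact: hs.
    - by rewrite mulr_ge0.
    - apply: keyK => //; exact: leq_trans hm2 hmn.
    - rewrite (inj_eq perm_inj); apply: contra hi' => /eqP /(congr1 val) /= ev.
      by apply/eqP; apply: val_inj.
  have hE : \sum_(i < m) l%:R * a * \sum_(i' < m) dY (e i i') (f (s (widen_ord hmn i)) (s (widen_ord hmn i'))) `^ p <=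
      \sum_(i < m) (n%:R * b * \sum_(i' < m) dY_ext dY CY (Orig (e i i'))
         (ext_f y0 f (pi (widen_ord hml i)) (pi (widen_ord hml i'))) `^ p
      + (l%:R * a - n%:R * b) * CY `^ p *+ m.-1).
    by apply: ler_sum => i _; exact: hRow.
  rewrite big_split /= sumr_const card_ord -!mulr_sumr in hE.
  have hK := @keyY R n l hn hnl.
  rewrite /costn /costl /gospa_cost -/a -/b.
  rewrite !big_split !sumr_const !card_ord (natrB _ hmn) (natrB _ hml).
  exact: (@final_alg R m n l _ _ _ _ _ _ _ _ hy0 hV hE hK).
have core2 : forall pi : 'S_l,
    l%:R * \big[Order.min/costn 1%g]_(s : 'S_n) costn s <= n%:R * costl pi.
  move=> pi; case: (@ext_perm l n hnl pi) => s hs.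
  apply: le_trans (core s pi _).
    by apply: ler_wpM2l; [exact: ltW | exact: bigmin_le].
  move=> i hi.
  have e0 : widen_ord hnl (widen_ord hmn i) = widen_ord hml i by exact: val_inj.
  by rewrite hs e0.
rewrite /gospa1 -/costn -/costl.
apply: final_pow => //; try (apply: bigmin_ge0 => *; exact: cost_ge0).
rewrite mulrC [_ * \big[_/_]__ _]mulrC -ler_pdivrMr //.
apply: le_bigmin => [|pi]; rewrite ler_pdivrMr // mulrC [_ * n%:R]mulrC.
all: try move=> _; exact: core2.
Qed.
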